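(* Let $\mathcal{A}$ be a dual Banach algebra with a central approximate identity. If $\mathcal{A}$ is Connes biprojective, then $\mathcal{A}$ is Johnson pseudo-Connes amenable.
   Context: A dual Banach algebra is a Banach algebra $\mathcal{A}$ together with a closed $\mathcal{A}$-submodule $\mathcal{A}_*$ of $\mathcal{A}^*$ such that $\mathcal{A}=(\mathcal{A}_* )^*$. A central approximate identity is a net $(e_\alpha)$ in $\mathcal{A}$ with $e_\alpha a=ae_\alpha$ for all $a$ and $e_\alpha a\to a$ in norm. For a bimodule $E$, $\sigma wc(E)$ is the set of $x\in E$ for which $a\mapsto a\cdot x$, $a\mapsto x\cdot a$ are weak$^*$-weak continuous. $\mathcal{A}\hat{\otimes}\mathcal{A}$ has actions $a\cdot(b\otimes c)=ab\otimes c$, $(b\otimes c)\cdot a=b\otimes ca$; duals carry the dual actions. $\pi_{\mathcal{A}}$ is the multiplication map $\mathcal{A}\hat{\otimes}\mathcal{A}\to\mathcal{A}$; $\pi_{\mathcal{A}}^*$ maps $\mathcal{A}_*$ into $\sigma wc((\mathcal{A}\hat{\otimes}\mathcal{A})^* )$ and its adjoint gives a bimodule map $\pi_{\sigma wc}:(\sigma wc((\mathcal{A}\hat{\otimes}\mathcal{A})^* ))^*\to\mathcal{A}$. $\mathcal{A}$ is Connes biprojective if there is a bounded $\mathcal{A}$-bimodule morphism $\rho:\mathcal{A}\to(\sigma wc((\mathcal{A}\hat{\otimes}\mathcal{A})^* ))^*$ with $\pi_{\sigma wc}\circ\rho=\mathrm{id}_{\mathcal{A}}$. With $i_{\mathcal{A}_*}:\mathcal{A}_*\hookrightarrow\mathcal{A}^*$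 the canonical embedding, $\mathcal{A}$ is Johnson pseudo-Connes amenable if there is a (not necessarily bounded) net $(m_\alpha)$ in $(\mathcal{A}\hat{\otimes}\mathcal{A})^{**}$ with $\langle T,a\cdot m_\alpha\rangle=\langle T,m_\alpha\cdot a\rangle$ for all $a\in\mathcal{A}$, $T\in\sigma wc((\mathcal{A}\hat{\otimes}\mathcal{A})^* )$, $\alpha$, and $i_{\mathcal{A}_*}^*\pi_{\mathcal{A}}^{**}(m_\alpha)a\to a$ for every $a\in\mathcal{A}$. *)

(* Defs.v *)
From HB Require Import structures.
From mathcomp Require Import all_boot all_algebra.
From mathcomp Require Import all_classical all_reals all_analysis.
From mathcomp Require Export complex.
Import numFieldNormedType.Exports.

Set Implicit Arguments.
Unset Strict Implicit.
Unset Printing Implicit Defensive.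
Import GRing.Theory Num.Theory.
Local Open Scope ring_scope.
Local Open Scope classical_set_scope.

(* The underlying Banach space is V (completeness is imposed in the theorem
   by taking V : completeNormedModType); the product is [bmul]. *)
Record banach_algebra (K : numFieldType) (V : normedModType K) := BanachAlgebra {
  bmul : V -> V -> V;
  bmulA : forall x y z, bmul x (bmul y z) = bmul (bmul x y) z;
  bmul_linl : forall (c : K) x y z, bmul (c *: x + y) z = c *: bmul x z + bmul y z;
  bmul_linr : forall (c : K) x y z, bmul x (c *: y + z) = c *: bmul x y + bmul x z;
  bmul_norm : forall x y, `|bmul x y| <= `|x| * `|y|
}.

Section DualBanach.
Variables (K : numFieldType) (V : normedModType K) (A : banach_algebra V).
Local Notation mul := (bmul A).

Definition directed (I : Type) (le : I -> I -> Prop) :=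
  [/\ (forall i, le i i), (forall i j k, le i j -> le j k -> le i k),
      (exists i : I, True) & (forall i j, exists k, le i k /\ le j k)].

Definition net_cvg (I : Type) (le : I -> I -> Prop) (x : I -> V) (l : V) :=
  forall e : K, 0 < e -> exists i0, forall i, le i0 i -> `|x i - l| < e.

Definition lin_fun (phi : V -> K) :=
  forall (c : K) x y, phi (c *: x + y) = c * phi x + phi y.
Definition bnd_fun (phi : V -> K) (D : K) := forall x, `|phi x| <= D * `|x|.
Definition dual_elt (phi : V -> K) := lin_fun phi /\ exists D, bnd_fun phi D.

(* ----- (A \hat\otimes A)^* = bounded bilinear forms on A x A ----- *)
Definition bil (T : V -> V -> K) :=
  (forall (c : K) x y z, T (c *: x + y) z = c * T x z + T y z) /\
  (forall (c : K) x y z, T x (c *: y + z) = c * T x y + T x z).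
Definition bnd_bil (T : V -> V -> K) (D : K) :=
  forall x y, `|T x y| <= D * `|x| * `|y|.
Definition tdual (T : V -> V -> K) := bil T /\ exists D, bnd_bil T D.

Definition bil_comb (c : K) (T S : V -> V -> K) : V -> V -> K :=
  fun x y => c * T x y + S x y.

Definition lin_on (P : (V -> V -> K) -> Prop) (M : (V -> V -> K) -> K) :=
  forall c T S, P T -> P S -> M (bil_comb c T S) = c * M T + M S.
Definition bnd_on (P : (V -> V -> K) -> Prop) (M : (V -> V -> K) -> K) (C : K) :=
  forall T D, P T -> 0 <= D -> bnd_bil T D -> `|M T| <= C * D.

Definition bidual (M : (V -> V -> K) -> K) :=
  lin_on tdual M /\ exists C, bnd_on tdual M C.

(* Dual module actions on (A \hat\otimes A)^*:
   <a.T, b(x)c> = <T, b(x)ca>,  <T.a, b(x)c> = <T, ab(x)c>. *)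
Definition lact_t (a : V) (T : V -> V -> K) : V -> V -> K := fun b c => T b (mul c a).
Definition ract_t (T : V -> V -> K) (a : V) : V -> V -> K := fun b c => T (mul a b) c.

Definition pi_star (phi : V -> K) : V -> V -> K := fun b c => phi (mul b c).

(* ----- dual Banach algebra with predual Ast = A_* ----- *)
Definition dual_banach_algebra (Ast : (V -> K) -> Prop) :=
      (forall phi, Ast phi -> dual_elt phi) /\
      Ast (fun _ => 0) /\
      (forall c phi psi, Ast phi -> Ast psi -> Ast (fun x => c * phi x + psi x)) /\
      (forall phi, dual_elt phi ->
         (forall e : K, 0 < e -> exists psi, Ast psi /\ bnd_fun (fun x => phi x - psi x) e) ->
         Ast phi) /\
      (forall a phi, Ast phi -> Ast (fun b => phi (mul b a)) /\ Ast (fun b => phi (mul a b))) /\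
      (* the canonical map A -> (A_* )^*, a |-> (phi |-> phi a), is isometric ... *)
      (forall a, (forall phi, Ast phi -> bnd_fun phi 1 -> `|phi a| <= `|a|) /\
                 (forall e : K, 0 < e -> exists phi, [/\ Ast phi, bnd_fun phi 1 & `|a| - e < `|phi a|])) /\
    (* ... and onto the bounded linear functionals on A_* *)
      (forall F : (V -> K) -> K,
         (forall c phi psi, Ast phi -> Ast psi -> F (fun x => c * phi x + psi x) = c * F phi + F psi) ->
         (exists C, forall phi D, Ast phi -> 0 <= D -> bnd_fun phi D -> `|F phi| <= C * D) ->
         exists a, forall phi, Ast phi -> F phi = phi a).

Definition wstar_cvg (Ast : (V -> K) -> Prop) (F : set_system V) (a : V) :=
  forall phi, Ast phi -> forall e : K, 0 < e -> F [set x | `|phi x - phi a| < e].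

(* f : A -> (A \hat\otimes A)^* is weak*-weak continuous: the image of any
   filter converging weak* to a converges to f a in sigma(E, E^* ), where
   E = (A \hat\otimes A)^* and E^* = (A \hat\otimes A)^** *)
Definition wsw_cont (Ast : (V -> K) -> Prop) (f : V -> (V -> V -> K)) :=
  forall (F : set_system V), Filter F -> forall a, wstar_cvg Ast F a ->
    forall Lam, bidual Lam -> forall e : K, 0 < e ->
      F [set x | `|Lam (f x) - Lam (f a)| < e].

Definition sigma_wc (Ast : (V -> K) -> Prop) (T : V -> V -> K) :=
  [/\ tdual T, wsw_cont Ast (fun a => lact_t a T) & wsw_cont Ast (fun a => ract_t T a)].

Definition has_central_approx_id :=
  exists (I : Type) (le : I -> I -> Prop) (e : I -> V),
    [/\ directed le, (forall i a, mul (e i) a = mul a (e i))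
      & forall a, net_cvg le (fun i => mul (e i) a) a].

(* rho a is an element of (sigma wc((A\hat\otimes A)^* ))^*, seen as a function
   on bilinear forms that only matters on sigma_wc.  Module actions on the
   dual: (a.u)(T) = u(T.a), (u.a)(T) = u(a.T).  pi_{sigma wc}(u) is the
   element of A = (A_* )^* given by phi |-> u(pi^* phi). *)
Definition connes_biprojective (Ast : (V -> K) -> Prop) :=
  exists rho : V -> ((V -> V -> K) -> K),
    (forall (c : K) a b T, sigma_wc Ast T -> rho (c *: a + b) T = c * rho a T + rho b T) /\
        (forall a, lin_on (sigma_wc Ast) (rho a)) /\
        (exists C, forall a T D, sigma_wc Ast T -> 0 <= D -> bnd_bil T D ->
                      `|rho a T| <= C * `|a| * D) /\
        (forall a b T, sigma_wc Ast T -> rho (mul a b) T = rho b (ract_t T a)) /\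
        (forall a b T, sigma_wc Ast T -> rho (mul b a) T = rho b (lact_t a T)) /\
      (forall a phi, Ast phi -> rho a (pi_star phi) = phi a).

(* m i in (A\hat\otimes A)^**; <T, a.m> = m(T.a), <T, m.a> = m(a.T);
   b i is the element of A = (A_* )^* equal to i^* pi^** (m i), i.e.
   phi (b i) = (m i)(pi^* phi) for phi in A_*. *)
Definition johnson_pseudo_connes_amenable (Ast : (V -> K) -> Prop) :=
  exists (I : Type) (le : I -> I -> Prop) (m : I -> ((V -> V -> K) -> K)) (b : I -> V),
    [/\ directed le,
        (forall i, bidual (m i)),
        (forall i a T, sigma_wc Ast T -> m i (ract_t T a) = m i (lact_t a T)),
        (forall i phi, Ast phi -> m i (pi_star phi) = phi (b i))
      & forall a, net_cvg le (fun i => mul (b i) a) a].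

End DualBanach.

(* Main.v *)
Require Import Defs.
From mathcomp Require Import all_boot all_order all_algebra.
From mathcomp Require Import all_classical all_reals all_analysis.
From mathcomp Require Import complex.
From mathcomp Require Import ring lra.
Set Implicit Arguments.
Unset Strict Implicit.
Unset Printing Implicit Defensive.
Import Order.TTheory GRing.Theory Num.Theory.
Local Open Scope ring_scope.
Local Open Scope classical_set_scope.
Section RealHB.
Variables (R : realType) (E : lmodType R).
Variables (Dom P : set E) (B : E -> R -> Prop) (f : E -> R).
Hypotheses
  (Dom0 : Dom 0) (DomC : forall a x y, Dom x -> Dom y -> Dom (a *: x + y))
  (P0 : P 0) (PC : forall a x y, P x -> P y -> P (a *: x + y))
  (PD : P `<=` Dom)
  (BD : forall x y D1 D2, B x D1 -> B y D2 -> B (x + y) (D1 + D2))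
  (BZ : forall t x D, 0 < t -> B x D -> B (t *: x) (t * D))
  (Bex : forall x, Dom x -> exists D, B x D)
  (flin : forall a x y, P x -> P y -> f (a *: x + y) = a * f x + f y)
  (fB : forall x D, P x -> B x D -> f x <= D).

Definition subsp (Q : set E) := Q 0 /\ forall a x y, Q x -> Q y -> Q (a *: x + y).
Definition pext (p : set E * (E -> R)) :=
  [/\ P `<=` p.1 /\ p.1 `<=` Dom, subsp p.1,
      (forall a x y, p.1 x -> p.1 y -> p.2 (a *: x + y) = a * p.2 x + p.2 y),
      (forall x D, p.1 x -> B x D -> p.2 x <= D) & (forall x, P x -> p.2 x = f x)].
Definition pT := {p : set E * (E -> R) | pext p}.
Definition ple (s t : pT) :=
  (sval s).1 `<=` (sval t).1 /\ forall x, (sval s).1 x -> (sval t).2 x = (sval s).2 x.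

Lemma pext0 : pext (P, f).
Proof. by split => //=; split. Qed.

Lemma subsp_sub Q x y : subsp Q -> Q x -> Q y -> Q (x - y).
Proof.
move=> [_ QC] Qx Qy.
have -> : x - y = (-1) *: y + x by rewrite scaleN1r addrC.
exact: QC.
Qed.

Lemma subsp_scale Q a x : subsp Q -> Q x -> Q (a *: x).
Proof. by move=> [Q0 QC] Qx; rewrite -[a *: x]addr0; apply: QC. Qed.

Lemma subsp_add Q x y : subsp Q -> Q x -> Q y -> Q (x + y).
Proof. by move=> [Q0 QC] Qx Qy; rewrite -[x]scale1r; apply: QC. Qed.

Lemma lin0 (Q : set E) (g : E -> R) : Q 0 ->
  (forall a x y, Q x -> Q y -> g (a *: x + y) = a * g x + g y) -> g 0 = 0.
Proof.
move=> Q0 gl; have := gl 1 0 0 Q0 Q0; rewrite scale1r addr0 mul1r.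
move=> h; have : g 0 + g 0 - g 0 = g 0 - g 0 by rewrite -h.
by rewrite addrK subrr.
Qed.

Lemma linZ (Q : set E) (g : E -> R) a x : Q 0 -> Q x ->
  (forall a x y, Q x -> Q y -> g (a *: x + y) = a * g x + g y) -> g (a *: x) = a * g x.
Proof.
move=> Q0 Qx gl; rewrite -[a *: x]addr0 gl // (lin0 Q0 gl) addr0 //.
Qed.

Lemma linD (Q : set E) (g : E -> R) x y : Q x -> Q y ->
  (forall a x y, Q x -> Q y -> g (a *: x + y) = a * g x + g y) -> g (x + y) = g x + g y.
Proof. by move=> Qx Qy gl; rewrite -[x]scale1r gl // mul1r scale1r. Qed.

Section Chain.
Variable A : set pT.
Hypothesis Atot : total_on A (fun s t => `[< ple s t >]).
Variable s0 : pT.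
Hypothesis As0 : A s0.

Let Qc := [set x | exists s, A s /\ (sval s).1 x].
Let gc (x : E) : R :=
  match pselect (exists s, A s /\ (sval s).1 x) with
  | left H => (sval (proj1_sig (cid H))).2 x
  | right _ => 0 end.

Lemma common s t x y : A s -> A t -> (sval s).1 x -> (sval t).1 y ->
  exists u, [/\ A u, (sval u).1 x, (sval u).1 y,
     (sval u).2 x = (sval s).2 x & (sval u).2 y = (sval t).2 y].
Proof.
move=> As At sx ty; have [/asboolP [st stg]|/asboolP [ts tsg]] := Atot As At.
- by exists t; split => //; [apply: st|apply: stg].
- by exists s; split => //; [apply: ts|apply: tsg].
Qed.

Lemma gcE s x : A s -> (sval s).1 x -> gc x = (sval s).2 x.
Proof.
move=> As sx; rewrite /gc; case: pselect => [H|]; last by move=> []; exists s.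
case: (cid H) => t [At tx] /=.
by have [u [_ _ _ <- <-]] := common At As tx sx.
Qed.

Lemma chain_ext : pext (Qc, gc).
Proof.
have [[Ps0 s0D] [s0Q0 _] _ _ s0f] := svalP s0.
split => /=.
- split; first by move=> x Px; exists s0; split => //; apply: Ps0.
  by move=> x [s [As sx]]; have [[_ sD] _ _ _ _] := svalP s; apply: sD.
- split; first by exists s0.
  move=> a x y [s [As sx]] [t [At ty]].
  have [u [Au ux uy _ _]] := common As At sx ty.
  have [_ [_ uC] _ _ _] := svalP u.
  by exists u; split => //; apply: uC.
- move=> a x y [s [As sx]] [t [At ty]].
  have [u [Au ux uy _ _]] := common As At sx ty.
  have [_ [_ uC] ul _ _] := svalP u.
  by rewrite !(gcE Au) //; [apply: ul | apply: uC].
- by move=> x D [s [As sx]] Bx; rewrite (gcE As sx); have [_ _ _ sB _] := svalP s; apply: sB.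
- by move=> x Px; rewrite (gcE As0) //; [apply: s0f | have [[Ps _] _ _ _ _] := svalP s0; apply: Ps].
Qed.

Lemma chain_ub : forall s, A s -> ple s (exist _ _ chain_ext).
Proof.
move=> s As; split => /=; first by move=> x sx; exists s.
by move=> x sx; rewrite (gcE As sx).
Qed.
End Chain.

Section OneStep.
Variables (Q : set E) (g : E -> R).
Hypothesis Qg : pext (Q, g).
Variable y : E.
Hypotheses (Dy : Dom y) (nQy : ~ Q y).

Let QS : subsp Q. Proof. by case: Qg. Qed.
Let QD : Q `<=` Dom. Proof. by case: Qg => -[]. Qed.
Let gl : forall a x y, Q x -> Q y -> g (a *: x + y) = a * g x + g y.
Proof. by case: Qg. Qed.
Let gB : forall x D, Q x -> B x D -> g x <= D. Proof. by case: Qg. Qed.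
Let Q0 : Q 0. Proof. by case: QS. Qed.

Let S := [set r | exists x D, [/\ Q x, B (x - y) D & r = g x - D]].

Lemma key x1 x2 D1 D2 : Q x1 -> Q x2 -> B (x1 - y) D1 -> B (x2 + y) D2 ->
  g x1 - D1 <= D2 - g x2.
Proof.
move=> Q1 Q2 B1 B2; have := BD B1 B2.
have -> : x1 - y + (x2 + y) = x1 + x2 by rewrite addrACA addNr addr0.
move=> B12; have := gB (subsp_add QS Q1 Q2) B12.
rewrite (linD Q1 Q2 gl) => h; lra.
Qed.

Lemma S_has_sup : has_sup S.
Proof.
have Dny : Dom (0 - y) by rewrite sub0r -scaleN1r -[_ *: y]addr0; apply: DomC.
have Dpy : Dom (0 + y) by rewrite add0r.
have [D1 B1] := Bex Dny; have [D2 B2] := Bex Dpy.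
split; first by exists (g 0 - D1); exists 0, D1.
exists (D2 - g 0) => r [x [D [Qx Bx ->]]]; exact: key Qx Q0 Bx B2.
Qed.

Let c := sup S.

Lemma c_lb x D : Q x -> B (x - y) D -> g x - D <= c.
Proof. by move=> Qx Bx; apply: sup_upper_bound S_has_sup _ _; exists x, D. Qed.

Lemma c_ub x D : Q x -> B (x + y) D -> c <= D - g x.
Proof.
move=> Qx Bx; apply: ge_sup; first by case: S_has_sup.
by move=> r [x' [D' [Qx' Bx' ->]]]; exact: key Qx' Qx Bx' Bx.
Qed.

Lemma decomp_uniq x1 x2 t1 t2 : Q x1 -> Q x2 -> x1 + t1 *: y = x2 + t2 *: y ->
  t1 = t2 /\ x1 = x2.
Proof.
move=> Q1 Q2 e.
have ht : t1 = t2.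
  apply: contrapT => ne; apply: nQy.
  have -> : y = (t1 - t2)^-1 *: (x2 - x1).
    have -> : x2 - x1 = (t1 - t2) *: y.
      rewrite scalerBl -[x2](addrK (t2 *: y)) -e.
      by rewrite addrAC (addrAC x1) subrr add0r.
    by rewrite scalerA mulVf ?scale1r // subr_eq0; apply/eqP.
  by apply: subsp_scale => //; apply: subsp_sub.
split=> //; move: e; rewrite ht; exact: addIr.
Qed.

Let Q' := [set z | exists p : E * R, Q p.1 /\ z = p.1 + p.2 *: y].
Let g' (z : E) : R :=
  match pselect (exists p : E * R, Q p.1 /\ z = p.1 + p.2 *: y) with
  | left H => let p := proj1_sig (cid H) in g p.1 + p.2 * c
  | right _ => 0 end.

Lemma g'E x t : Q x -> g' (x + t *: y) = g x + t * c.
Proof.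
move=> Qx; rewrite /g'; case: pselect => [H|]; last by move=> []; exists (x, t).
case: (cid H) => -[x' t'] /= [Qx' e].
by have [-> ->] := decomp_uniq Qx' Qx (esym e).
Qed.

Lemma ext_ext : pext (Q', g').
Proof.
have [[PQ _] _ _ _ gf] := Qg.
split => /=.
- split; first by move=> x Px; exists (x, 0); rewrite scale0r addr0; split => //; apply: PQ.
  by move=> _ [[x t] [/= Qx ->]]; rewrite addrC; apply: DomC => //; apply: QD.
- split; first by exists (0, 0); rewrite /= scale0r addr0.
  move=> a _ _ [[x1 t1] [/= Q1 ->]] [[x2 t2] [/= Q2 ->]].
  exists (a *: x1 + x2, a * t1 + t2); split; first by case: QS => _; apply.
  by rewrite /= scalerDr addrACA scalerA scalerDl.
- move=> a _ _ [[x1 t1] [/= Q1 ->]] [[x2 t2] [/= Q2 ->]].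
  have -> : a *: (x1 + t1 *: y) + (x2 + t2 *: y) = (a *: x1 + x2) + (a * t1 + t2) *: y.
    by rewrite scalerDr addrACA scalerA scalerDl.
  rewrite !g'E //; last by case: QS => _; apply.
  rewrite gl //; ring.
- move=> _ D [[x t] [/= Qx ->]] Bz; rewrite g'E //.
  have [t0|tn0] := eqVneq t 0.
    by move: Bz; rewrite t0 scale0r addr0 mul0r addr0; apply: gB.
  have [tp|tn] := ltrP 0 t.
    have ti : 0 < t^-1 by rewrite invr_gt0.
    have := BZ ti Bz.
    rewrite scalerDr scalerA mulVf // scale1r => Bz'.
    have := c_ub (subsp_scale _ QS Qx) Bz'.
    rewrite (linZ _ Q0 Qx gl) => h.
    have : t * c <= t * (t^-1 * D - t^-1 * g x) by rewrite ler_pM2l.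
    rewrite mulrBr !mulrA mulfV // !mul1r => h2; lra.
  have sp : 0 < - t by rewrite oppr_gt0 lt_neqAle tn0 tn.
  have si : 0 < (- t)^-1 by rewrite invr_gt0.
  have := BZ si Bz.
  rewrite scalerDr scalerA invrN mulNr mulVf // scaleN1r -/(_ - y) => Bz'.
  have := c_lb (subsp_scale _ QS Qx) Bz'.
  rewrite (linZ _ Q0 Qx gl) => h.
  have := ler_wpM2l (ltW sp) h.
  rewrite mulrBr !mulrA !mulrNN mulfV // !mul1r => h2; lra.
- move=> x Px; have Qx := PQ x Px.
  have -> : g' x = g x + 0 * c by rewrite -{1}[x]addr0 -(scale0r y) g'E.
  by rewrite mul0r addr0; exact: gf.
Qed.

Lemma ext_big : Q `<=` Q' /\ forall x, Q x -> g' x = g x.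
Proof.
split; first by move=> x Qx; exists (x, 0); rewrite scale0r addr0.
by move=> x Qx; rewrite -{1}[x]addr0 -(scale0r y) g'E // mul0r addr0.
Qed.

Lemma ext_has_y : Q' y.
Proof. by exists (0, 1); rewrite /= scale1r add0r. Qed.
End OneStep.

Theorem real_hb : exists F : E -> R,
  [/\ (forall a x y, Dom x -> Dom y -> F (a *: x + y) = a * F x + F y),
      (forall x D, Dom x -> B x D -> F x <= D) & (forall x, P x -> F x = f x)].
Proof.
have Rrefl : forall s, `[< ple s s >] by move=> s; apply/asboolP; split.
have Rtrans : forall r s t, `[< ple r s >] -> `[< ple s t >] -> `[< ple r t >].
  move=> r s t /asboolP [rs rsg] /asboolP [st stg]; apply/asboolP; split.
    by move=> x /rs /st.
  by move=> x rx; rewrite stg ?rsg //; apply: rs.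
have Rch : forall A : set pT, total_on A (fun s t => `[< ple s t >]) ->
    exists t, forall s, A s -> `[< ple s t >].
  move=> A Atot; have [[s0 As0]|A0] := pselect (A !=set0).
    by exists (exist _ _ (chain_ext Atot As0)) => s As; apply/asboolP; exact: chain_ub.
  by exists (exist _ _ pext0) => s As; exfalso; apply: A0; exists s.
have [t tmax] := @ZL_preorder pT (exist _ _ pext0) (fun s t => `[< ple s t >]) Rrefl Rtrans Rch.
case: t tmax => -[Q g] H tmax.
have DQ : Dom `<=` Q.
  move=> y Dy; apply: contrapT => nQy.
  have [big bigg] := ext_big H nQy.
  have /tmax /asboolP [sub _] : `[< ple (exist _ _ H) (exist _ _ (ext_ext H Dy nQy)) >].
    by apply/asboolP; split.
  by apply: (nQy); apply: sub; exact: (ext_has_y H y).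
have [[PQ QD] QS gl gB gf] := H.
exists g; split => //.
- by move=> a x y Dx Dy; apply: gl; apply: DQ.
- by move=> x D Dx; apply: gB; apply: DQ.
Qed.
End RealHB.
Local Open Scope complex_scope.
Section CX.
Variables (R : realType) (V : normedModType R[i]).
Local Notation C := R[i].
Local Notation Form := (V -> V -> C).
Local Notation RForm := (V -> V -> Rcomplex R).

Lemma scaleE (t : R) (T : RForm) x y : (t *: T) x y = t%:C * T x y.
Proof. change (scalec t (T x y) = t%:C * T x y). by case: (T x y) => a b /=; simpc. Qed.

Lemma addE (T S : RForm) x y : (T + S) x y = T x y + S x y.
Proof. by []. Qed.

Lemma zeroE x y : (0 : RForm) x y = 0.
Proof. by []. Qed.

Lemma realC (z : C) : 0 <= z -> z = (complex.Re z)%:C.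
Proof. by case: z => a b; rewrite lecE => /andP [/eqP /= -> _]. Qed.

Lemma Re_ge0 (z : C) : 0 <= z -> 0 <= complex.Re z.
Proof. by move=> h; move: (h); rewrite (realC h) ler0c. Qed.

Lemma sanitize (T : Form) D : bnd_bil T D -> bnd_bil T (Num.max (complex.Re D) 0)%:C.
Proof.
move=> h x y; have := h x y; move: h.
rewrite [`|T x y|]realC // [`|x|]realC // [`|y|]realC //.
case: D => dr di _; rewrite !lecE; simpc => /andP [_ hr] /=.
apply: (le_trans hr); rewrite -!mulrA; apply: ler_wpM2r.
  by apply: mulr_ge0; apply: Re_ge0.
by rewrite le_max lexx.
Qed.

Lemma tdual_real (T : Form) : tdual T -> exists D : R, 0 <= D /\ bnd_bil T D%:C.
Proof.
move=> [_ [D hD]]; exists (Num.max (complex.Re D) 0); split; last exact: sanitize.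
by rewrite le_max lexx orbT.
Qed.

Lemma Cge0 (D : R) : 0 <= D -> 0 <= D%:C :> C.
Proof. by rewrite ler0c. Qed.

Lemma tdual0 : tdual (fun _ _ : V => 0 : C).
Proof.
split; first by split => *; rewrite mulr0 addr0.
exists 0 => x y; by rewrite normr0 !mul0r.
Qed.

Lemma tdual_comb c (T S : Form) : tdual T -> tdual S -> tdual (bil_comb c T S).
Proof.
move=> hT hS; have [[T1 T2] _] := hT; have [[S1 S2] _] := hS.
have [D1 [D1p B1]] := tdual_real hT; have [D2 [D2p B2]] := tdual_real hS.
split; first by split => c0 x y z; rewrite /bil_comb ?T1 ?S1 ?T2 ?S2; ring.
exists (`|c| * D1%:C + D2%:C) => x y; rewrite /bil_comb.
apply: (le_trans (ler_normD _ _)).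
rewrite !mulrDl normrM -!mulrA; apply: lerD; last by rewrite mulrA; apply: B2.
by apply: ler_wpM2l => //; rewrite mulrA; apply: B1.
Qed.

Lemma combE (a : R) (T S : RForm) : a *: T + S = bil_comb a%:C T S.
Proof. by apply/funext => x; apply/funext => y; rewrite addE scaleE. Qed.


Lemma normC_real (D : R) : 0 <= D -> `|D%:C| = D%:C :> C.
Proof. by move=> h; rewrite ger0_norm // ler0c. Qed.

Lemma Re_le_norm (z : C) : complex.Re z <= complex.Re `|z|.
Proof.
have h := normc_ge_Re z; rewrite [`|z|]realC // lecR in h.
exact: le_trans (ler_norm _) h.
Qed.

Lemma bndB_add (T S : Form) D1 D2 : bnd_bil T D1 -> bnd_bil S D2 ->
  bnd_bil (fun x y => T x y + S x y) (D1 + D2).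
Proof.
move=> h1 h2 x y; apply: (le_trans (ler_normD _ _)).
by rewrite !mulrDl; apply: lerD.
Qed.

Lemma bndB_scale (T : Form) (c : C) D : bnd_bil T D ->
  bnd_bil (fun x y => c * T x y) (`|c| * D).
Proof.
move=> h x y; rewrite normrM -!mulrA; apply: ler_wpM2l => //.
by rewrite mulrA; apply: h.
Qed.

Lemma alg (c : C) (u v w x : R) : ((complex.Re c*u + complex.Im c*v + w)%:C - 'i%C * ((- complex.Im c)*u + complex.Re c*v + x)%:C) =
  c * (u%:C - 'i%C * v%:C) + (w%:C - 'i%C * x%:C) :> C.
Proof. case: c => a b /=. by apply/eqP; rewrite eq_complex; simpc; rewrite /=; apply/eqP; ring. Qed.

Let iT (T : Form) : Form := bil_comb 'i%C T (fun _ _ => 0).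

Lemma complex_ext (P : Form -> Prop) (f : Form -> C) (K : R) :
  0 <= K -> (forall T, P T -> tdual T) -> P (fun _ _ => 0) ->
  (forall c T S, P T -> P S -> P (bil_comb c T S)) -> lin_on P f ->
  (forall T D, P T -> 0 <= D -> bnd_bil T D%:C -> `|f T| <= (K * D)%:C) ->
  exists m, bidual m /\ forall T, P T -> m T = f T.
Proof.
move=> K0 PD P0 PC flin fB.
pose B (T : RForm) (D : R) := exists D', [/\ 0 <= D', bnd_bil (T : Form) D'%:C & D = K * D'].
have f0 : f (fun _ _ => 0) = 0.
  have := flin 1 _ _ P0 P0.
  have -> : bil_comb 1 (fun _ _ : V => 0 : C) (fun _ _ => 0) = (fun _ _ => 0).
    by apply/funext => x; apply/funext => y; rewrite /bil_comb mulr0 addr0.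
  rewrite mul1r => h; have : f (fun _ _ => 0) + f (fun _ _ => 0) - f (fun _ _ => 0) = f (fun _ _ => 0) - f (fun _ _ => 0) by rewrite -h.
  by rewrite addrK subrr.
have hDom0 : tdual (0 : RForm) by exact: tdual0.
have hDomC : forall (a : R) (x y : RForm), tdual x -> tdual y -> tdual (a *: x + y).
  by move=> a x y hx hy; rewrite combE; apply: tdual_comb.
have hP0 : P (0 : RForm) by [].
have hPC : forall (a : R) (x y : RForm), P x -> P y -> P (a *: x + y).
  by move=> a x y hx hy; rewrite combE; apply: PC.
have hBD : forall (x y : RForm) D1 D2, B x D1 -> B y D2 -> B (x + y) (D1 + D2).
  move=> x y _ _ [D1 [p1 b1 ->]] [D2 [p2 b2 ->]]; exists (D1 + D2); split.
  - exact: addr_ge0.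
  - by rewrite rmorphD; apply: bndB_add.
  - by rewrite mulrDr.
have hBZ : forall (t : R) (x : RForm) D, 0 < t -> B x D -> B (t *: x) (t * D).
  move=> t x _ tp [D [p b ->]]; exists (t * D); split.
  - by apply: mulr_ge0 => //; apply: ltW.
  - move=> u v; have := bndB_scale t%:C b u v.
    by rewrite scaleE rmorphM normC_real // ltW.
  - by rewrite mulrCA.
have hBex : forall x : RForm, tdual x -> exists D, B x D.
  by move=> x /tdual_real [D [p b]]; exists (K * D), D.
have hflin : forall (a : R) (x y : RForm), P x -> P y ->
    complex.Re (f (a *: x + y)) = a * complex.Re (f x) + complex.Re (f y).
  move=> a x y hx hy; rewrite combE flin //.
  by case: (f x) => p q; case: (f y) => r s; simpc.
have hfB : forall (x : RForm) D, P x -> B x D -> complex.Re (f x) <= D.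
  move=> x _ hx [D [p b ->]]; apply: (le_trans (Re_le_norm _)).
  have := fB x D hx p b; rewrite [`|f x|]realC // lecR //.
have [U [Ulin UB Uf]] := @real_hb R RForm (@tdual _ V) P B (fun T => complex.Re (f T))
  hDom0 hDomC hP0 hPC PD hBD hBZ hBex hflin hfB.
pose m (T : Form) : C := (U T)%:C - 'i%C * (U (iT T))%:C.
have U0 : U (fun _ _ => 0) = 0 by exact: (@lin0 R RForm (@tdual _ V) U hDom0 Ulin).
have iTd : forall T, tdual T -> tdual (iT T).
  by move=> T hT; apply: tdual_comb => //; apply: tdual0.
have Ucomb : forall c T S, tdual T -> tdual S ->
    U (bil_comb c T S) = complex.Re c * U T + complex.Im c * U (iT T) + U S.
  move=> c T S hT hS.
  have -> : (bil_comb c T S : RForm) =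
      (complex.Re c) *: (T : RForm) + ((complex.Im c) *: (iT T : RForm) + (S : RForm)).
    apply/funext => x; apply/funext => y; rewrite !addE !scaleE /iT /bil_comb.
    by rewrite {1}(complexE c); ring.
  have h1 : tdual (iT T) := iTd T hT.
  have h2 : tdual ((complex.Im c) *: (iT T : RForm) + (S : RForm)) by apply: hDomC.
  by rewrite Ulin // Ulin // addrA.
have iTcomb : forall c T S, iT (bil_comb c T S) = bil_comb (c * 'i%C) T (iT S).
  by move=> c T S; apply/funext => x; apply/funext => y; rewrite /iT /bil_comb; ring.
have mlin : forall c T S, tdual T -> tdual S -> m (bil_comb c T S) = c * m T + m S.
  move=> c T S hT hS; rewrite /m iTcomb (Ucomb c T S) // (Ucomb (c * 'i%C) T (iT S)) //; last exact: iTd.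
  by rewrite ReiNIm ImiRe; apply: alg.
have mRe : forall T, complex.Re (m T) = U T.
  by move=> T; rewrite /m; simpc.
have m0 : m (fun _ _ => 0) = 0.
  rewrite /m; have -> : iT (fun _ _ => 0) = (fun _ _ => 0).
    by apply/funext => x; apply/funext => y; rewrite /iT /bil_comb mulr0 addr0.
  by rewrite /m U0 mulr0 subr0.
have mB : forall T D, tdual T -> 0 <= D -> bnd_bil T D -> `|m T| <= K%:C * D.
  move=> T D hT D0 hb; rewrite (realC D0) in hb *.
  have d0 := Re_ge0 D0; move: (complex.Re D) d0 hb => d d0 hb.
  have [z0|zn0] := eqVneq (m T) 0.
    by rewrite z0 normr0; apply: mulr_ge0; rewrite ler0c.
  pose lam := `|m T| / m T.
  have hl : `|lam| = 1 by rewrite /lam normrM normfV normr_id mulfV // normr_eq0.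
  have hmT : m (bil_comb lam T (fun _ _ => 0)) = `|m T|.
    rewrite mlin //; try exact: tdual0.
    by rewrite m0 addr0 /lam divfK.
  have hB : B (bil_comb lam T (fun _ _ => 0)) (K * d).
    exists d; split => // x y; rewrite /bil_comb addr0.
    by have := bndB_scale lam hb x y; rewrite hl mul1r.
  have := UB _ _ (tdual_comb lam hT tdual0) hB; rewrite -mRe hmT => h.
  by rewrite [`|m T|]realC // -rmorphM lecR.
have magree : forall T, P T -> m T = f T.
  move=> T hT; have hiT : P (iT T) by apply: PC.
  rewrite /m !Uf // /iT flin // f0 addr0.
  by case: (f T) => a b; simpc.
exists m; split => //; split; first by move=> c T S hT hS; apply: mlin.
by exists K%:C => T D hT D0 hb; apply: mB.
Qed.
End CX.
Local Open Scope complex_scope.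
Section Main.
Variables (R : realType) (V : normedModType R[i]) (A : banach_algebra V).
Variable (Ast : (V -> R[i]) -> Prop).
Local Notation C := R[i].
Local Notation Form := (V -> V -> C).
Local Notation mul := (bmul A).

Lemma bnd_lact (T : Form) D a : 0 <= D -> bnd_bil T D -> bnd_bil (lact_t A a T) (D * `|a|).
Proof.
move=> D0 h x y; rewrite /lact_t; apply: (le_trans (h _ _)).
rewrite -!mulrA; apply: ler_wpM2l => //; rewrite mulrCA; apply: ler_wpM2l => //.
by rewrite mulrC; apply: bmul_norm.
Qed.

Lemma bnd_ract (T : Form) D a : 0 <= D -> bnd_bil T D -> bnd_bil (ract_t A T a) (D * `|a|).
Proof.
move=> D0 h x y; rewrite /ract_t; apply: (le_trans (h _ _)).
rewrite -!mulrA; apply: ler_wpM2l => //; rewrite mulrA; apply: ler_wpM2r => //.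
exact: bmul_norm.
Qed.

Lemma tdual_lact (T : Form) a : tdual T -> tdual (lact_t A a T).
Proof.
move=> hT; have [[T1 T2] _] := hT; have [D [D0 hD]] := tdual_real hT.
split; last by exists (D%:C * `|a|); apply: bnd_lact; rewrite ?ler0c.
by split => c x y z; rewrite /lact_t ?T1 // bmul_linl T2.
Qed.

Lemma tdual_ract (T : Form) a : tdual T -> tdual (ract_t A T a).
Proof.
move=> hT; have [[T1 T2] _] := hT; have [D [D0 hD]] := tdual_real hT.
split; last by exists (D%:C * `|a|); apply: bnd_ract; rewrite ?ler0c.
by split => c x y z; rewrite /ract_t ?T2 // bmul_linr T1.
Qed.

Lemma bidual_lact Lam a : bidual Lam -> bidual (fun T => Lam (lact_t A a T)).
Proof.
move=> [Ll [K KB]]; split.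
  by move=> c T S hT hS /=; apply: Ll; apply: tdual_lact.
exists (K * `|a|) => T D hT D0 hb.
rewrite -mulrA [`|a| * D]mulrC; apply: KB; first exact: tdual_lact.
  by apply: mulr_ge0.
exact: bnd_lact.
Qed.

Lemma bidual_ract Lam a : bidual Lam -> bidual (fun T => Lam (ract_t A T a)).
Proof.
move=> [Ll [K KB]]; split.
  by move=> c T S hT hS /=; apply: Ll; apply: tdual_ract.
exists (K * `|a|) => T D hT D0 hb.
rewrite -mulrA [`|a| * D]mulrC; apply: KB; first exact: tdual_ract.
  by apply: mulr_ge0.
exact: bnd_ract.
Qed.

Lemma wsw_comp (f : V -> Form) (Phi : Form -> Form) : wsw_cont Ast f ->
  (forall Lam, bidual Lam -> bidual (fun T => Lam (Phi T))) ->
  wsw_cont Ast (fun x => Phi (f x)).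
Proof. by move=> hf hP F FF a ha Lam hL; exact: (hf F FF a ha (fun T => Lam (Phi T)) (hP Lam hL)). Qed.

Lemma wsw_shift (f : V -> Form) (h : V -> V) : wsw_cont Ast f ->
  (forall phi, Ast phi -> Ast (fun x => phi (h x))) ->
  wsw_cont Ast (fun x => f (h x)).
Proof.
move=> hf hA F FF a ha Lam hL e e0.
have FhF : Filter (h @ F) := fmap_filter h FF.
have := hf (h @ F) FhF (h a) _ Lam hL e e0; apply.
by move=> phi hphi e1 e10; exact: (ha _ (hA phi hphi) e1 e10).
Qed.


Lemma wsw_comb (c : C) (f g : V -> Form) : wsw_cont Ast f -> wsw_cont Ast g ->
  (forall x, tdual (f x)) -> (forall x, tdual (g x)) ->
  wsw_cont Ast (fun x => bil_comb c (f x) (g x)).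
Proof.
move=> hf hg tf tg F FF a ha Lam hL e e0.
have [Ll _] := hL.
pose k := `|c| + 1.
have k1 : 1 <= k by rewrite /k lerDr normr_ge0.
have k0 : 0 < k by apply: lt_le_trans k1.
pose e2 := e / 2%:R; pose e1 := e2 / k.
have pe2 : 0 < e2 by apply: divr_gt0.
have pe1 : 0 < e1 by apply: divr_gt0.
have H1 := hf F FF a ha Lam hL e1 pe1; have H2 := hg F FF a ha Lam hL e2 pe2.
apply: (@filterS2 _ _ FF _ _ _ _ H1 H2) => x /= h1 h2.
rewrite !Ll //.
have -> : c * Lam (f x) + Lam (g x) - (c * Lam (f a) + Lam (g a)) =
  c * (Lam (f x) - Lam (f a)) + (Lam (g x) - Lam (g a)) by ring.
apply: le_lt_trans (ler_normD _ _) _; rewrite normrM (splitr e).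
apply: ler_ltD h2.
apply: le_trans (ler_wpM2l (normr_ge0 c) (ltW h1)) _.
apply: le_trans (ler_wpM2r (ltW pe1) (_ : `|c| <= k)) _; first by rewrite /k lerDl.
by rewrite mulrC divfK // gt_eqF.
Qed.

Lemma sigma_wc0 : sigma_wc A Ast (fun _ _ => 0).
Proof.
split; first exact: tdual0.
- move=> F FF a ha Lam hL e e0; apply: filterS filterT => x _.
  by rewrite /= /lact_t subrr normr0.
- move=> F FF a ha Lam hL e e0; apply: filterS filterT => x _.
  by rewrite /= /ract_t subrr normr0.
Qed.

Lemma sigma_wc_comb c T S : sigma_wc A Ast T -> sigma_wc A Ast S ->
  sigma_wc A Ast (bil_comb c T S).
Proof.
move=> [tT lT rT] [tS lS rS]; split; first exact: tdual_comb.
- exact: (wsw_comb c lT lS (fun x => tdual_lact x tT) (fun x => tdual_lact x tS)).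
- exact: (wsw_comb c rT rS (fun x => tdual_ract x tT) (fun x => tdual_ract x tS)).
Qed.

Hypothesis Amod : forall a phi, Ast phi ->
  Ast (fun b => phi (mul b a)) /\ Ast (fun b => phi (mul a b)).

Lemma sigma_wc_lact a T : sigma_wc A Ast T -> sigma_wc A Ast (lact_t A a T).
Proof.
move=> [tT lT rT]; split; first exact: tdual_lact.
- have -> : (fun x => lact_t A x (lact_t A a T)) = (fun x => lact_t A (mul x a) T).
    by apply/funext => x; apply/funext => b; apply/funext => c; rewrite /lact_t bmulA.
  by apply: (wsw_shift lT) => phi hphi; apply: (Amod a hphi).1.
- exact: (wsw_comp rT (fun Lam hL => bidual_lact a hL)).
Qed.

Lemma sigma_wc_ract a T : sigma_wc A Ast T -> sigma_wc A Ast (ract_t A T a).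
Proof.
move=> [tT lT rT]; split; first exact: tdual_ract.
- exact: (wsw_comp lT (fun Lam hL => bidual_ract a hL)).
- have -> : (fun x => ract_t A (ract_t A T a) x) = (fun x => ract_t A T (mul a x)).
    by apply/funext => x; apply/funext => b; apply/funext => c; rewrite /ract_t bmulA.
  by apply: (wsw_shift rT) => phi hphi; apply: (Amod a hphi).2.
Qed.


Lemma sanitize_fun (phi : V -> C) D : bnd_fun phi D ->
  bnd_fun phi (Num.max (complex.Re D) 0)%:C.
Proof.
move=> h x; have := h x; move: h.
rewrite [`|phi x|]realC // [`|x|]realC //.
case: D => dr di _; rewrite !lecE; simpc => /andP [_ hr] /=.
apply: (le_trans hr); apply: ler_wpM2r; first by apply: Re_ge0.
by rewrite le_max lexx.
Qed.

Lemma dual_real (phi : V -> C) : dual_elt phi -> exists D : R, 0 <= D /\ bnd_fun phi D%:C.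
Proof.
move=> [_ [D hD]]; exists (Num.max (complex.Re D) 0); split; last exact: sanitize_fun.
by rewrite le_max lexx orbT.
Qed.

Lemma bnd_pi (phi : V -> C) D : 0 <= D -> bnd_fun phi D -> bnd_bil (pi_star A phi) D.
Proof.
move=> D0 h x y; rewrite /pi_star; apply: (le_trans (h _)).
by rewrite -mulrA; apply: ler_wpM2l => //; apply: bmul_norm.
Qed.

Lemma tdual_pi (phi : V -> C) : dual_elt phi -> tdual (pi_star A phi).
Proof.
move=> hp; have [hl _] := hp; have [D [D0 hD]] := dual_real hp.
split; last by exists D%:C; apply: bnd_pi; rewrite ?ler0c.
by split => c x y z; rewrite /pi_star ?bmul_linl ?bmul_linr hl.
Qed.

Hypothesis Adual : forall phi, Ast phi -> dual_elt phi.
Hypothesis Asurj : forall F : (V -> C) -> C,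
         (forall c phi psi, Ast phi -> Ast psi -> F (fun x => c * phi x + psi x) = c * F phi + F psi) ->
         (exists C, forall phi D, Ast phi -> 0 <= D -> bnd_fun phi D -> `|F phi| <= C * D) ->
         exists a, forall phi, Ast phi -> F phi = phi a.

Lemma Gex Lam : bidual Lam -> exists c0, forall psi, Ast psi -> Lam (pi_star A psi) = psi c0.
Proof.
move=> [Ll [K KB]]; apply: Asurj.
  by move=> c p1 p2 h1 h2; apply: Ll; apply: tdual_pi; apply: Adual.
exists K => p D hp D0 hb; apply: KB => //; first by apply: tdual_pi; apply: Adual.
exact: bnd_pi.
Qed.

Lemma sigma_pi (phi : V -> C) : Ast phi -> sigma_wc A Ast (pi_star A phi).
Proof.
move=> hphi; split; first by apply: tdual_pi; apply: Adual.
- move=> F FF a ha Lam hL e e0; have [c0 hc0] := Gex hL.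
  have E : forall x, lact_t A x (pi_star A phi) = pi_star A (fun y => phi (mul y x)).
    by move=> x; apply/funext => b; apply/funext => c; rewrite /lact_t /pi_star bmulA.
  apply: filterS (ha _ (Amod c0 hphi).2 e e0) => x /=.
  by rewrite !E !hc0 //; apply: (Amod _ hphi).1.
- move=> F FF a ha Lam hL e e0; have [c0 hc0] := Gex hL.
  have E : forall x, ract_t A (pi_star A phi) x = pi_star A (fun y => phi (mul x y)).
    by move=> x; apply/funext => b; apply/funext => c; rewrite /ract_t /pi_star bmulA.
  apply: filterS (ha _ (Amod c0 hphi).1 e e0) => x /=.
  by rewrite !E !hc0 //; apply: (Amod _ hphi).2.
Qed.

End Main.

Theorem proposition2p6 (R : realType) (V : completeNormedModType R[i])
    (A : banach_algebra V) (Ast : (V -> R[i]) -> Prop) :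
  dual_banach_algebra A Ast ->
  has_central_approx_id A ->
  connes_biprojective A Ast ->
  johnson_pseudo_connes_amenable A Ast.
Proof.
move=> [Adual [_ [_ [_ [Amod [_ Asurj]]]]]] [I [le [e [hdir hcomm hcvg]]]].
move=> [rho [rlin [rlin2 [[C0 rB] [rR [rL rpi]]]]]].
have hm : forall i, exists m, bidual m /\ forall T, sigma_wc A Ast T -> m T = rho (e i) T.
  move=> i.
  pose w := C0 * `|e i|.
  pose K := Num.max (complex.Re w) 0.
  apply: (@complex_ext R V (sigma_wc A Ast) (rho (e i)) K).
  - by rewrite le_max lexx orbT.
  - by move=> T [].
  - exact: sigma_wc0.
  - by move=> c T S hT hS; apply: sigma_wc_comb.
  - exact: rlin2.
  - move=> T D hT D0 hb; have := rB (e i) T D%:C hT (Cge0 D0) hb.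
    rewrite [`|rho _ _|]realC // -/w lecR lecE => /andP [_ h].
    apply: (le_trans h).
    have -> : complex.Re (w * D%:C) = complex.Re w * D by case: (w) => a b; simpc.
    by apply: ler_wpM2r => //; rewrite le_max lexx.
case: (choice hm) => m hm'.
exists I, le, m, e; split => //.
- by move=> i; case: (hm' i).
- move=> i a T hT.
  rewrite (proj2 (hm' i) _ (sigma_wc_ract Amod a hT)).
  rewrite (proj2 (hm' i) _ (sigma_wc_lact Amod a hT)).
  by rewrite -rR // -rL // hcomm.
- move=> i phi hphi; rewrite (proj2 (hm' i)) ?rpi //.
  exact: (sigma_pi Amod Adual Asurj hphi).
Qed.
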